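(* Let $\lambda_1,\lambda_2>0$ and consider the linear saddle $\dot x=\lambda_1x$, $\dot y=-\lambda_2y$ in the bidisc $\{|x|,|y|\le1\}\subset\mathbb{C}^2$, with first integral $H=x^{1/\lambda_1}y^{1/\lambda_2}$. Fix $0<h<1$ and let $U_s=\{|H|<h\}\cap\{|x|,|y|\le1\}$. Then there exists a pair $v=(v_1,v_I)$ of smooth real vector fields on $U_s$ satisfying $d(\log H)(v_1)=1$ and $d(\log H)(v_I)=i$, such that: (1) both the negative-time flow of $v_1$ and the flow of $v_I$ do not increase $|x|$ and $|y|$; (2) both $v_1$ and $v_I$ are tangent to the lines $\{y=\mathrm{const}\}$ near $(0,1)$ and to the lines $\{x=\mathrm{const}\}$ near $(1,0)$.
   Context: $d(\log H)$ denotes the differential of any local branch of $\log H$ (which is single-valued as a one-form). A real vector field on $\mathbb{C}^2$ is a vector field on the underlying $\mathbb{R}^4$. *)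

(* Defs.v *)
(* C is modelled as R * R (real part, imaginary
   part); C^2 = C * C is then the underlying real 4-dimensional space. *)
From HB Require Import structures.
From mathcomp Require Import all_boot all_order all_algebra.
From mathcomp Require Import all_classical all_reals all_analysis.
Set Implicit Arguments. Unset Strict Implicit. Unset Printing Implicit Defensive.
Import Order.TTheory GRing.Theory Num.Theory.
Import numFieldNormedType.Exports.
Local Open Scope classical_set_scope.
Local Open Scope ring_scope.

Section Defs.
Variable R : realType.

Definition cplx := (R * R)%type.
Definition C2 := (cplx * cplx)%type.

Definition cmul (z w : cplx) : cplx := (z.1 * w.1 - z.2 * w.2, z.1 * w.2 + z.2 * w.1).
Definition cinv (z : cplx) : cplx :=
  (z.1 / (z.1 ^+ 2 + z.2 ^+ 2), - z.2 / (z.1 ^+ 2 + z.2 ^+ 2)).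
Definition cdiv (z w : cplx) : cplx := cmul z (cinv w).
Definition cmod (z : cplx) : R := Num.sqrt (z.1 ^+ 2 + z.2 ^+ 2).
Definition cI : cplx := (0, 1).
Definition c1 : cplx := (1, 0).

Definition absH (l1 l2 : R) (p : C2) : R :=
  powR (cmod p.1) (l1^-1) * powR (cmod p.2) (l2^-1).

Definition Us (l1 l2 h : R) : set C2 :=
  [set p | absH l1 l2 p < h /\ cmod p.1 <= 1 /\ cmod p.2 <= 1].

(* d(log H) at p (with x y <> 0) applied to a real tangent vector w = (w_x, w_y):
   since log H = (1/l1) log x + (1/l2) log y (any branch),
   d(log H)(w) = w_x / (l1 x) + w_y / (l2 y). *)
Definition dlogH (l1 l2 : R) (p w : C2) : cplx :=
  cdiv w.1 (cmul (l1, 0) p.1) + cdiv w.2 (cmul (l2, 0) p.2).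

Fixpoint iterD (vs : seq C2) (f : C2 -> C2) : C2 -> C2 :=
  match vs with
  | [::] => f
  | u :: us => fun q => derive (iterD us f) q u
  end.

Definition smooth_on (O : set C2) (f : C2 -> C2) : Prop :=
  forall (vs : seq C2) (q : C2), O q -> differentiable (iterD vs f) q.

Definition smooth_on_set (A : set C2) (f : C2 -> C2) : Prop :=
  exists O : set C2, open O /\ A `<=` O /\ smooth_on O f.

Definition integral_curve (A : set C2) (w : C2 -> C2) (a b : R) (g : R -> C2) : Prop :=
  forall t, a < t < b -> A (g t) /\ is_derive t 1 g (w (g t)).

Definition flow_nonincr_xy (A : set C2) (w : C2 -> C2) : Prop :=
  forall (a b : R) (g : R -> C2), integral_curve A w a b g ->
    forall s t, a < s -> s <= t -> t < b ->
      cmod (g t).1 <= cmod (g s).1 /\ cmod (g t).2 <= cmod (g s).2.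

Definition pt01 : C2 := ((0, 0), (1, 0)).
Definition pt10 : C2 := ((1, 0), (0, 0)).

Definition tangent_y_const_near (A : set C2) (p0 : C2) (w : C2 -> C2) : Prop :=
  exists e : R, 0 < e /\ forall p, A p -> ball p0 e p -> (w p).2 = 0.
Definition tangent_x_const_near (A : set C2) (p0 : C2) (w : C2 -> C2) : Prop :=
  exists e : R, 0 < e /\ forall p, A p -> ball p0 e p -> (w p).1 = 0.

End Defs.

(* Main.v *)
Require Import Defs.
From HB Require Import structures.
From mathcomp Require Import all_boot all_order all_algebra.
From mathcomp Require Import all_classical all_reals all_analysis.
From mathcomp Require Import ring lra.
Import Order.TTheory GRing.Theory Num.Theory.
Import numFieldNormedType.Exports.
Set Implicit Arguments. Unset Strict Implicit. Unset Printing Implicit Defensive.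
Local Open Scope classical_set_scope.
Local Open Scope ring_scope.
Section Sm.
Variable R : realType.
Local Notation V := (C2 R).

Fixpoint Cn (n : nat) (f : V -> R) : Prop :=
  (forall q, differentiable f q) /\
  (if n is m.+1 then forall u, Cn m (fun q => derive f q u) else True).

Lemma Cn_diff n f : Cn n f -> forall q, differentiable f q.
Proof. by case: n => [|n] []. Qed.

Lemma CnS n f : Cn n.+1 f -> Cn n f.
Proof.
elim: n f => [|n IH] f [df H]; first by split.
by split => // u; apply: IH; apply: H.
Qed.

Lemma Cn_cst n (c : R) : Cn n (fun _ => c).
Proof.
elim: n c => [|n IH] c; split => //.
all: try (by move=> q; apply: differentiable_cst).
move=> u.
have -> : (fun q => derive (fun _ : V => c) q u) = (fun _ => 0).
  by apply: funext => q; exact: (derive_cst c q u).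
exact: IH.
Qed.

Lemma Cn_add n f g : Cn n f -> Cn n g -> Cn n (fun q => f q + g q).
Proof.
elim: n f g => [|n IH] f g Hf Hg.
  split => // q; change (differentiable (f + g) q); exact: (differentiableD (Cn_diff Hf q) (Cn_diff Hg q)).
split.
  move=> q; change (differentiable (f + g) q); exact: (differentiableD (Cn_diff Hf q) (Cn_diff Hg q)).
move=> u.
have -> : (fun q => derive (fun q => f q + g q) q u) =
   (fun q => derive f q u + derive g q u).
  apply: funext => q; change (derive (f + g) q u = derive f q u + derive g q u); apply: deriveD; apply: diff_derivable.
    exact: (Cn_diff Hf q).
  exact: (Cn_diff Hg q).
by apply: IH; [apply: Hf.2|apply: Hg.2].
Qed.

Lemma Cn_mul n f g : Cn n f -> Cn n g -> Cn n (fun q => f q * g q).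
Proof.
elim: n f g => [|n IH] f g Hf Hg.
  split => // q; exact: (differentiableM (Cn_diff Hf q) (Cn_diff Hg q)).
split.
  move=> q; change (differentiable (f * g) q); exact: (differentiableM (Cn_diff Hf q) (Cn_diff Hg q)).
move=> u.
have -> : (fun q => derive (fun q => f q * g q) q u) =
   (fun q => f q * derive g q u + g q * derive f q u).
  apply: funext => q; change (derive (f * g) q u = f q *: derive g q u + g q *: derive f q u); apply: deriveM; apply: diff_derivable.
    exact: (Cn_diff Hf q).
  exact: (Cn_diff Hg q).
apply: Cn_add; apply: IH.
- exact: CnS.
- exact: Hg.2.
- exact: CnS.
- exact: Hf.2.
Qed.

Lemma Cn_inv n f : (forall q, f q != 0) -> Cn n f -> Cn n (fun q => (f q)^-1).
Proof.
move=> f0; elim: n f f0 => [|n IH] f f0 Hf.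
  split => // q; exact: (differentiableV (Cn_diff Hf q) (f0 q)).
split.
  move=> q; exact: (differentiableV (Cn_diff Hf q) (f0 q)).
move=> u.
have -> : (fun q => derive (fun q => (f q)^-1) q u) =
   (fun q => (-1) * ((f q)^-1 * (f q)^-1 * derive f q u)).
  apply: funext => q; rewrite (deriveV (f0 q)); last first.
    exact: diff_derivable (Cn_diff Hf q).
  by rewrite -exprVn expr2 mulN1r scaleNr.
apply: Cn_mul; first exact: Cn_cst.
apply: Cn_mul; last exact: Hf.2.
by apply: Cn_mul; apply: IH => //; exact: CnS.
Qed.

Definition smooth1 (phi : R -> R) := forall k t, derivable (derive1n k phi) t 1.

Lemma Cn_comp n phi f : smooth1 phi -> Cn n f -> Cn n (fun q => phi (f q)).
Proof.
elim: n phi f => [|n IH] phi f Hp Hf.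
  split => // q; apply: differentiable_comp; first exact: (Cn_diff Hf q).
  by apply/derivable1_diffP; exact: (Hp 0%N (f q)).
have dc : forall q, differentiable (fun q => phi (f q)) q.
  move=> q; apply: differentiable_comp; first exact: (Cn_diff Hf q).
  by apply/derivable1_diffP; exact: (Hp 0%N (f q)).
split => // u.
have -> : (fun q => derive (fun q => phi (f q)) q u) =
   (fun q => derive1 phi (f q) * derive f q u).
  apply: funext => q.
  have dfq := Cn_diff Hf q.
  have dp : differentiable phi (f q) by apply/derivable1_diffP; exact: (Hp 0%N (f q)).
  rewrite (deriveE _ (dc q)) (deriveE _ dfq).
  change (fun q => phi (f q)) with (phi \o f).
  by rewrite diff_comp // /= diff1E // mulrC.
apply: (@Cn_mul n (fun q => derive1 phi (f q)) (fun q => derive f q u)); last exact: Hf.2.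
apply: IH; last exact: CnS.
by move=> k t; rewrite -derive1Sn; exact: Hp.
Qed.

Lemma Cn_lin n (L : {linear V -> R}) : continuous L -> Cn n L.
Proof.
move=> Lc; case: n => [|n]; split => //; try (by move=> q; exact: linear_differentiable).
move=> u.
have -> : (fun q => derive L q u) = (fun _ => L u).
  apply: funext => q; rewrite deriveE; last exact: linear_differentiable.
  rewrite diff_lin //.
exact: Cn_cst.
Qed.

Definition pr11 (q : V) : R := q.1.1.
Definition pr12 (q : V) : R := q.1.2.
Definition pr21 (q : V) : R := q.2.1.
Definition pr22 (q : V) : R := q.2.2.
Lemma pr11_lin : linear pr11. Proof. by move=> a x y. Qed.
Lemma pr12_lin : linear pr12. Proof. by move=> a x y. Qed.
Lemma pr21_lin : linear pr21. Proof. by move=> a x y. Qed.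
Lemma pr22_lin : linear pr22. Proof. by move=> a x y. Qed.
HB.instance Definition _ := GRing.isLinear.Build R V R _ pr11 pr11_lin.
HB.instance Definition _ := GRing.isLinear.Build R V R _ pr12 pr12_lin.
HB.instance Definition _ := GRing.isLinear.Build R V R _ pr21 pr21_lin.
HB.instance Definition _ := GRing.isLinear.Build R V R _ pr22 pr22_lin.

Lemma Cn_pr11 n : Cn n (fun q : V => q.1.1). Proof. change (Cn n pr11). apply: (@Cn_lin n (pr11 : {linear V -> R})) => x; apply: cvg_comp; [exact: cvg_fst|exact: cvg_fst]. Qed.
Lemma Cn_pr12 n : Cn n (fun q : V => q.1.2). Proof. change (Cn n pr12). apply: (@Cn_lin n (pr12 : {linear V -> R})) => x; apply: cvg_comp; [exact: cvg_fst|exact: cvg_snd]. Qed.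
Lemma Cn_pr21 n : Cn n (fun q : V => q.2.1). Proof. change (Cn n pr21). apply: (@Cn_lin n (pr21 : {linear V -> R})) => x; apply: cvg_comp; [exact: cvg_snd|exact: cvg_fst]. Qed.
Lemma Cn_pr22 n : Cn n (fun q : V => q.2.2). Proof. change (Cn n pr22). apply: (@Cn_lin n (pr22 : {linear V -> R})) => x; apply: cvg_comp; [exact: cvg_snd|exact: cvg_snd]. Qed.

Definition Sm (f : V -> R) := forall n, Cn n f.

Lemma Sm_D f u : Sm f -> Sm (fun q => derive f q u).
Proof. by move=> Hf n; exact: (Hf n.+1).2. Qed.

Lemma Sm_diff f : Sm f -> forall q, differentiable f q.
Proof. by move=> Hf; exact: (Cn_diff (Hf 0%N)). Qed.

Fixpoint iterS (vs : seq V) (f : V -> R) : V -> R :=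
  match vs with
  | [::] => f
  | u :: us => fun q => derive (iterS us f) q u
  end.

Lemma Sm_iterS vs f : Sm f -> Sm (iterS vs f).
Proof. by elim: vs => [|u us IH] //= Hf; apply: Sm_D; apply: IH. Qed.

Definition mk (f1 f2 f3 f4 : V -> R) : V -> V :=
  fun q => ((f1 q, f2 q), (f3 q, f4 q)).

Lemma diff_mk f1 f2 f3 f4 q :
  differentiable f1 q -> differentiable f2 q -> differentiable f3 q ->
  differentiable f4 q -> differentiable (mk f1 f2 f3 f4) q.
Proof.
move=> d1 d2 d3 d4; apply: differentiable_pair; exact: differentiable_pair.
Qed.

Lemma derive_mk f1 f2 f3 f4 q u :
  differentiable f1 q -> differentiable f2 q -> differentiable f3 q ->
  differentiable f4 q -> derive (mk f1 f2 f3 f4) q u =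
  ((derive f1 q u, derive f2 q u), (derive f3 q u, derive f4 q u)).
Proof.
move=> d1 d2 d3 d4.
have dm := diff_mk d1 d2 d3 d4.
rewrite (deriveE u dm).
have e1 := diff_pair d1 d2.
have e2 := diff_pair d3 d4.
have e3 := diff_pair (differentiable_pair d1 d2) (differentiable_pair d3 d4).
have E1 : 'd (fun y => (f1 y, f2 y)) q u = (derive f1 q u, derive f2 q u).
  rewrite (deriveE u d1) (deriveE u d2). exact: (congr1 (fun L => L u) e1).
have E2 : 'd (fun y => (f3 y, f4 y)) q u = (derive f3 q u, derive f4 q u).
  rewrite (deriveE u d3) (deriveE u d4). exact: (congr1 (fun L => L u) e2).
have E3 := congr1 (fun L => L u) e3.
rewrite /mk; exact: (etrans E3 (f_equal2 pair E1 E2)).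
Qed.

Lemma iterD_mk vs f1 f2 f3 f4 : Sm f1 -> Sm f2 -> Sm f3 -> Sm f4 ->
  Defs.iterD vs (mk f1 f2 f3 f4) = mk (iterS vs f1) (iterS vs f2) (iterS vs f3) (iterS vs f4).
Proof.
move=> s1 s2 s3 s4; elim: vs => [|u us IH] //=.
rewrite IH; apply: funext => q.
by rewrite derive_mk //; apply: Sm_diff; apply: Sm_iterS.
Qed.

Lemma smooth_mk f1 f2 f3 f4 : Sm f1 -> Sm f2 -> Sm f3 -> Sm f4 ->
  forall A, smooth_on_set A (mk f1 f2 f3 f4).
Proof.
move=> s1 s2 s3 s4 A; exists setT; split; first exact: openT.
split => // vs q _; rewrite iterD_mk //.
by apply: diff_mk; apply: Sm_diff; apply: Sm_iterS.
Qed.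

End Sm.

Section Flat.
Variable R : realType.

Lemma poly_bound (P : {poly R}) (u : R) : 1 <= u ->
  `|P.[u]| <= (\sum_(i < size P) `|P`_i|) * u ^+ size P.
Proof.
move=> u1; rewrite horner_coef big_distrl /=.
apply: (le_trans (ler_norm_sum _ _ _)); apply: ler_sum => i _.
rewrite normrM normrX (ger0_norm (le_trans ler01 u1)).
apply: ler_wpM2l => //; apply: ler_weXn2l => //.
exact: ltnW (ltn_ord i).
Qed.

Lemma expN_bound (u : R) (n : nat) : 0 < u ->
  expR (- u) <= n.+1`!%:R / u ^+ n.+1.
Proof.
move=> u0; rewrite expRN.
have h1 : u ^+ n.+1 / n.+1`!%:R <= expR u.
  apply: le_trans (expR_ge1Dxn n (ltW u0)); by rewrite lerDr.
have hp : 0 < u ^+ n.+1 / n.+1`!%:R.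
  by apply: divr_gt0; [exact: exprn_gt0|rewrite ltr0n fact_gt0].
by rewrite -[_ / u ^+ _]invf_div lef_pV2 ?posrE ?expR_gt0.
Qed.

Lemma flat_bound (P : {poly R}) : exists C : R, 0 <= C /\
  forall h : R, 0 < h -> h <= 1 -> `|P.[h^-1]| * expR (- h^-1) <= C * h ^+ 2.
Proof.
set S := \sum_(i < size P) `|P`_i|.
set d := size P.
have S0 : 0 <= S by apply: sumr_ge0 => i _.
exists (S * (d.+2)`!%:R); split; first by apply: mulr_ge0 => //.
move=> h h0 h1.
have u1 : 1 <= h^-1 by rewrite invf_ge1.
have u0 : 0 < h^-1 by rewrite invr_gt0.
apply: le_trans (ler_pM (normr_ge0 _) (expR_ge0 _) (poly_bound P u1) (expN_bound d.+1 u0)) _.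
rewrite -/S -/d !exprSr.
have hn0 : h != 0 by rewrite gt_eqF.
have un0 : h^-1 ^+ d != 0 by rewrite expf_neq0 // invr_eq0.
rewrite le_eqVlt; apply/orP; left; apply/eqP.
by field; rewrite hn0 un0.
Qed.

Definition gP (P : {poly R}) (t : R) : R :=
  if 0 < t then P.[t^-1] * expR (- t^-1) else 0.
Definition Qop (P : {poly R}) : {poly R} := 'X^2 * (P - P^`()).

Lemma gP_derive_pos (P : {poly R}) (t : R) : 0 < t -> is_derive t 1 (gP P) (gP (Qop P) t).
Proof.
move=> t0.
have tn0 : t != 0 by rewrite gt_eqF.
have H1 : is_derive t 1 (fun s : R => s^-1) (- (t ^+ 2)^-1).
  have := is_deriveV tn0 (is_derive_id t 1).
  by rewrite scaler1.
have H2 : is_derive t 1 (horner P \o (fun s : R => s^-1)) (P^`().[t^-1] * - (t ^+ 2)^-1).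
  exact: is_derive1_comp.
have H3 : is_derive t 1 (fun s : R => - s^-1) ((t ^+ 2)^-1).
  by rewrite -[X in is_derive _ _ _ X]opprK; apply: is_deriveN.
have H4 : is_derive t 1 (expR \o (fun s : R => - s^-1)) (expR (- t^-1) * (t ^+ 2)^-1).
  exact: is_derive1_comp.
have H5 := is_deriveM H2 H4.
have -> : gP (Qop P) t = ((horner P \o (fun s : R => s^-1)) t *: (expR (- t^-1) * (t ^+ 2)^-1) +
    (expR \o (fun s : R => - s^-1)) t *: (P^`().[t^-1] * - (t ^+ 2)^-1)).
  rewrite /gP t0 /Qop /= hornerM hornerXn hornerD hornerN.
  rewrite /GRing.scale /=.
  by field.
apply: (near_eq_is_derive _ H5).
near=> s.
have s0 : 0 < s by near: s; exact: lt_nbhsr.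
by rewrite /gP s0.
Unshelve. all: by end_near.
Qed.


Lemma gP_derive_neg (P : {poly R}) (t : R) : t < 0 -> is_derive t 1 (gP P) (gP (Qop P) t).
Proof.
move=> t0.
have -> : gP (Qop P) t = 0 by rewrite /gP ltNge (ltW t0).
apply: (near_eq_is_derive _ (is_derive_cst (0 : R) t 1)).
near=> s.
have s0 : s < 0 by near: s; exact: lt_nbhsl.
by rewrite /gP ltNge (ltW s0).
Unshelve. all: by end_near.
Qed.

Lemma gP0 (P : {poly R}) : gP P 0 = 0.
Proof. by rewrite /gP ltxx. Qed.

Lemma gP_derive_0 (P : {poly R}) : is_derive (0:R) (1:R) (gP P) (gP (Qop P) 0).
Proof.
rewrite gP0.
have [C [C0 HC]] := flat_bound P.
have L : (fun h : R => h^-1 *: ((gP P \o shift (0:R)) (h *: (1:R)) - gP P 0)) @ (0:R)^' --> (0 : R).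
  apply/cvgrPdist_le => eps eps0.
  have r0 : 0 < Num.min 1 (eps / (C + 1)).
    by rewrite lt_min ltr01 /= divr_gt0 // ltr_wpDl.
  near=> h.
  have hr : `|h| < Num.min 1 (eps / (C + 1)) by near: h; exact: dnbhs0_lt.
  rewrite gP0 subr0 sub0r normrN /= /shift addr0 [_%:A]mulr1.
  rewrite /gP; case: ifPn => h0; last by rewrite scaler0 normr0 ltW.
  move: hr; rewrite lt_min => /andP[h1 he].
  rewrite (gtr0_norm h0) in h1 he.
  rewrite /GRing.scale /= !normrM (gtr0_norm (expR_gt0 _)) (gtr0_norm (_ : 0 < h^-1)) ?invr_gt0//.
  apply: (le_trans (ler_wpM2l _ (HC h h0 (ltW h1)))); first by rewrite invr_ge0 ltW.
  have -> : h^-1 * (C * h ^+ 2) = C * h by field; rewrite gt_eqF.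
  have hC : h * (C + 1) < eps by rewrite -ltr_pdivlMr // ltr_wpDl.
  nra.
apply: DeriveDef; first by apply/cvg_ex; exists 0.
exact: cvg_lim L.
Unshelve. all: by end_near.
Qed.


Lemma gP_derive (P : {poly R}) (t : R) : is_derive t 1 (gP P) (gP (Qop P) t).
Proof.
case: (ltgtP t 0) => [t0|t0|->]; first exact: gP_derive_neg.
  exact: gP_derive_pos.
exact: gP_derive_0.
Qed.

Lemma derive1_gP (P : {poly R}) : derive1 (gP P) = gP (Qop P).
Proof.
apply: funext => t; rewrite derive1E.
by have [_ ->] := gP_derive P t.
Qed.

Lemma derive1n_gP (P : {poly R}) k : derive1n k (gP P) = gP (iter k Qop P).
Proof.
elim: k => [|k IH]; first by rewrite derive1n0.
by rewrite derive1nS IH derive1_gP.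
Qed.

Lemma smooth_gP (P : {poly R}) k t : derivable (derive1n k (gP P)) t 1.
Proof. by rewrite derive1n_gP; have [] := gP_derive (iter k Qop P) t. Qed.

End Flat.

Section Flow.
Variable R : realType.

Lemma is_derive_fst (U1 U2 : normedModType R) (g : R -> U1 * U2) (t : R) d :
  is_derive t 1 g d -> is_derive t 1 (fun s => (g s).1) d.1.
Proof.
move=> [dg <-].
have L1 : (fun h : R => (h^-1 *: ((g \o shift t) (h *: 1) - g t)).1) @ 0^' --> ('D_1 g t).1.
  exact: (cvg_comp _ _ dg (cvg_fst (G:=nbhs (_ : U2)) (F:=nbhs (_:U1)))).
apply: DeriveDef; first by apply/cvg_ex; eexists; exact: L1.
by apply: cvg_lim => //; exact: L1.
Qed.

Lemma is_derive_snd (U1 U2 : normedModType R) (g : R -> U1 * U2) (t : R) d :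
  is_derive t 1 g d -> is_derive t 1 (fun s => (g s).2) d.2.
Proof.
move=> [dg <-].
have L1 : (fun h : R => (h^-1 *: ((g \o shift t) (h *: 1) - g t)).2) @ 0^' --> ('D_1 g t).2.
  exact: (cvg_comp _ _ dg (cvg_snd (G:=nbhs (_ : U2)) (F:=nbhs (_:U1)))).
apply: DeriveDef; first by apply/cvg_ex; eexists; exact: L1.
by apply: cvg_lim => //; exact: L1.
Qed.

Lemma nincr (N dN : R -> R) (a b : R) :
  (forall t, a < t < b -> is_derive t 1 N (dN t)) ->
  (forall t, a < t < b -> dN t <= 0) ->
  forall s t, a < s -> s <= t -> t < b -> N t <= N s.
Proof.
move=> HD Hn s t as0 st tb.
have sub : forall x, x \in `[s, t] -> a < x < b.
  move=> x; rewrite in_itv /= => /andP[sx xt].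
  by rewrite (lt_le_trans as0 sx) (le_lt_trans xt tb).
apply: (@ler0_derive1_nincr R N s t) => //.
- move=> x; rewrite in_itv /= => /andP[sx xt].
  have hx : a < x < b by apply: sub; rewrite in_itv /= ltW // ltW.
  by have [] := HD x hx.
- move=> x; rewrite in_itv /= => /andP[sx xt].
  have hx : a < x < b by apply: sub; rewrite in_itv /= ltW // ltW.
  by rewrite derive1E; have [_ ->] := HD x hx; apply: Hn.
- apply: derivable_within_continuous => x /sub hx.
  by have [] := HD x hx.
Qed.


Lemma normsq_derive (g : R -> C2 R) (t : R) (d : C2 R) :
  is_derive t 1 g d ->
  is_derive t 1 (fun s => (g s).1.1 * (g s).1.1 + (g s).1.2 * (g s).1.2)
    (2 * ((g t).1.1 * d.1.1 + (g t).1.2 * d.1.2)) /\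
  is_derive t 1 (fun s => (g s).2.1 * (g s).2.1 + (g s).2.2 * (g s).2.2)
    (2 * ((g t).2.1 * d.2.1 + (g t).2.2 * d.2.2)).
Proof.
move=> dg.
have d1 := is_derive_fst dg; have d2 := is_derive_snd dg.
have d11 := is_derive_fst d1; have d12 := is_derive_snd d1.
have d21 := is_derive_fst d2; have d22 := is_derive_snd d2.
split.
- have := is_deriveD (is_deriveM d11 d11) (is_deriveM d12 d12).
  move/is_derive_eq; apply.
  by rewrite !(_ : forall x y : R, x *: y = x * y) //; ring.
- have := is_deriveD (is_deriveM d21 d21) (is_deriveM d22 d22).
  move/is_derive_eq; apply.
  by rewrite !(_ : forall x y : R, x *: y = x * y) //; ring.
Qed.

Lemma flow_lemma (A : set (C2 R)) (w : C2 R -> C2 R) :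
 (forall p, A p -> p.1.1 * (w p).1.1 + p.1.2 * (w p).1.2 <= 0) ->
 (forall p, A p -> p.2.1 * (w p).2.1 + p.2.2 * (w p).2.2 <= 0) ->
 flow_nonincr_xy A w.
Proof.
move=> H1 H2 a b g IC s t as0 st tb.
rewrite /cmod !ler_sqrt ?addr_ge0 ?sqr_ge0 // !expr2; split.
- apply: (@nincr (fun s => (g s).1.1 * (g s).1.1 + (g s).1.2 * (g s).1.2)
     (fun t => 2 * ((g t).1.1 * (w (g t)).1.1 + (g t).1.2 * (w (g t)).1.2)) a b) => //.
  + by move=> x hx; have [Ax dx] := IC x hx; have [] := normsq_derive dx.
  + move=> x hx; have [Ax dx] := IC x hx.
    by rewrite pmulr_rle0 // H1.
- apply: (@nincr (fun s => (g s).2.1 * (g s).2.1 + (g s).2.2 * (g s).2.2)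
     (fun t => 2 * ((g t).2.1 * (w (g t)).2.1 + (g t).2.2 * (w (g t)).2.2)) a b) => //.
  + by move=> x hx; have [Ax dx] := IC x hx; have [] := normsq_derive dx.
  + move=> x hx; have [Ax dx] := IC x hx.
    by rewrite pmulr_rle0 // H2.
Qed.

End Flow.

Section Main.
Variable R : realType.

Definition f0 (t : R) : R := gP 1 t.

Lemma f0_ge0 t : 0 <= f0 t.
Proof. by rewrite /f0 /gP; case: ifP => // _; rewrite hornerC mul1r expR_ge0. Qed.

Lemma f0_gt0 t : 0 < t -> 0 < f0 t.
Proof. by move=> t0; rewrite /f0 /gP t0 hornerC mul1r expR_gt0. Qed.

Lemma f0_eq0 t : t <= 0 -> f0 t = 0.
Proof. by move=> t0; rewrite /f0 /gP ltNge t0. Qed.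

Lemma smooth_f0 : smooth1 f0.
Proof. by move=> k t; exact: smooth_gP. Qed.

Definition sy (q : C2 R) : R := q.2.1 * q.2.1 + q.2.2 * q.2.2.
Definition F1 (q : C2 R) : R := f0 (sy q + (- (4%:R)^-1)).
Definition F2 (q : C2 R) : R := f0 ((2%:R)^-1 + (-1) * sy q).
Definition den (q : C2 R) : R := F1 q + F2 q.
Definition aa (q : C2 R) : R := F1 q * (den q)^-1.
Definition bb (q : C2 R) : R := F2 q * (den q)^-1.

Lemma den_gt0 q : 0 < den q.
Proof.
rewrite /den /F1 /F2.
have [h|h] := ltP (4%:R^-1 : R) (sy q).
  apply: (@lt_le_trans _ _ (f0 (sy q + - 4%:R^-1))); last by rewrite lerDl f0_ge0.
  by apply: f0_gt0; rewrite subr_gt0.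
apply: (@lt_le_trans _ _ (f0 (2%:R^-1 + -1 * sy q))); last by rewrite lerDr f0_ge0.
apply: f0_gt0.
have : (4%:R^-1 : R) < 2%:R^-1 by rewrite ltf_pV2 ?posrE ?ltr_nat.
lra.
Qed.

Lemma den_neq0 q : den q != 0.
Proof. by rewrite gt_eqF // den_gt0. Qed.

Lemma aa_ge0 q : 0 <= aa q.
Proof. by rewrite /aa mulr_ge0 ?f0_ge0 // invr_ge0 ltW // den_gt0. Qed.
Lemma bb_ge0 q : 0 <= bb q.
Proof. by rewrite /bb mulr_ge0 ?f0_ge0 // invr_ge0 ltW // den_gt0. Qed.
Lemma aabb q : aa q + bb q = 1.
Proof. by rewrite /aa /bb -mulrDl divff // den_neq0. Qed.

Lemma Sm_sy : Sm sy.
Proof. by move=> n; apply: Cn_add; apply: Cn_mul; (apply: Cn_pr21 || apply: Cn_pr22). Qed.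

Lemma Sm_F1 : Sm F1.
Proof.
move=> n; apply: (Cn_comp (f := fun q => sy q + (- (4%:R)^-1))) => //.
  exact: smooth_f0.
by apply: Cn_add; [exact: Sm_sy|exact: Cn_cst].
Qed.

Lemma Sm_F2 : Sm F2.
Proof.
move=> n; apply: (Cn_comp (f := fun q => (2%:R)^-1 + (-1) * sy q)) => //.
  exact: smooth_f0.
by apply: Cn_add; [exact: Cn_cst|apply: Cn_mul; [exact: Cn_cst|exact: Sm_sy]].
Qed.

Lemma Sm_deninv : Sm (fun q => (den q)^-1).
Proof.
move=> n; apply: Cn_inv; first exact: den_neq0.
by apply: Cn_add; [exact: Sm_F1|exact: Sm_F2].
Qed.

Lemma Sm_aa : Sm aa.
Proof. by move=> n; apply: Cn_mul; [exact: Sm_F1|exact: Sm_deninv]. Qed.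
Lemma Sm_bb : Sm bb.
Proof. by move=> n; apply: Cn_mul; [exact: Sm_F2|exact: Sm_deninv]. Qed.

Lemma sumsq_gt0 (z : R * R) : z != 0 -> 0 < z.1 ^+ 2 + z.2 ^+ 2.
Proof.
case: z => x y /= nz.
rewrite lt_neqAle addr_ge0 ?sqr_ge0 // andbT eq_sym.
rewrite paddr_eq0 ?sqr_ge0 // !sqrf_eq0.
apply: contra nz => /andP[/eqP -> /eqP ->] //.
Qed.

Lemma near01 p : ball (pt01 R) (4%:R^-1) p -> bb p = 0.
Proof.
move=> [[_ _] [h1 h2]]; rewrite /ball /= in h1 h2.
rewrite /bb /F2 f0_eq0 ?mul0r //.
move: h1 h2; rewrite /sy !ltr_norml => /andP[h1 h1'] /andP[h2 h2'].
have e4 : (4%:R^-1 : R) = 1/4 by rewrite div1r.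
have e2 : (2%:R^-1 : R) = 1/2 by rewrite div1r.
rewrite e4 in h1 h1' h2 h2'; rewrite e2.
nra.
Qed.

Lemma near10 p : ball (pt10 R) (4%:R^-1) p -> aa p = 0.
Proof.
move=> [[_ _] [h1 h2]]; rewrite /ball /= in h1 h2.
rewrite /aa /F1 f0_eq0 ?mul0r //.
move: h1 h2; rewrite /sy !ltr_norml => /andP[h1 h1'] /andP[h2 h2'].
have e4 : (4%:R^-1 : R) = 1/4 by rewrite div1r.
rewrite e4 in h1 h1' h2 h2' *.
nra.
Qed.

Lemma addpair (x y z w : R) : (x, y) + (z, w) = (x + z, y + w) :> R * R.
Proof. by []. Qed.

Lemma cdiv1 (c l : R) (z : R * R) : l != 0 -> z != 0 ->
  cdiv (c * (l * z.1), c * (l * z.2)) (cmul (l, 0) z) = (c, 0).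
Proof.
move=> l0 z0; have := sumsq_gt0 z0; case: z z0 => x y /= _ s0.
rewrite /cdiv /cmul /cinv /=.
have s1 : (l * x) ^+ 2 + (l * y) ^+ 2 != 0.
  have -> : (l * x) ^+ 2 + (l * y) ^+ 2 = l ^+ 2 * (x ^+ 2 + y ^+ 2) by ring.
  by rewrite mulf_neq0 ?sqrf_eq0 // gt_eqF.
by congr pair; field; rewrite ?s1.
Qed.

Lemma cdivI (c l : R) (z : R * R) : l != 0 -> z != 0 ->
  cdiv (-1 * (c * (l * z.2)), c * (l * z.1)) (cmul (l, 0) z) = (0, c).
Proof.
move=> l0 z0; have := sumsq_gt0 z0; case: z z0 => x y /= _ s0.
rewrite /cdiv /cmul /cinv /=.
have s1 : (l * x) ^+ 2 + (l * y) ^+ 2 != 0.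
  have -> : (l * x) ^+ 2 + (l * y) ^+ 2 = l ^+ 2 * (x ^+ 2 + y ^+ 2) by ring.
  by rewrite mulf_neq0 ?sqrf_eq0 // gt_eqF.
by congr pair; field; rewrite ?s1.
Qed.



End Main.

Theorem lemma3 (R : realType) (l1 l2 h : R) :
  0 < l1 -> 0 < l2 -> 0 < h -> h < 1 ->
  exists v1 vI : C2 R -> C2 R,
    smooth_on_set (Us l1 l2 h) v1 /\ smooth_on_set (Us l1 l2 h) vI /\
    (forall p, Us l1 l2 h p -> p.1 != 0 -> p.2 != 0 ->
       dlogH l1 l2 p (v1 p) = c1 R /\ dlogH l1 l2 p (vI p) = cI R) /\
    (* (1) *)
    flow_nonincr_xy (Us l1 l2 h) (fun p => - v1 p) /\
    flow_nonincr_xy (Us l1 l2 h) vI /\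
    (* (2) *)
    tangent_y_const_near (Us l1 l2 h) (pt01 R) v1 /\
    tangent_y_const_near (Us l1 l2 h) (pt01 R) vI /\
    tangent_x_const_near (Us l1 l2 h) (pt10 R) v1 /\
    tangent_x_const_near (Us l1 l2 h) (pt10 R) vI.
Proof.
move=> l10 l20 h0 h1.
pose a := @aa R; pose b := @bb R.
exists (mk (fun q => a q * (l1 * q.1.1)) (fun q => a q * (l1 * q.1.2))
           (fun q => b q * (l2 * q.2.1)) (fun q => b q * (l2 * q.2.2))).
exists (mk (fun q => (-1) * (a q * (l1 * q.1.2))) (fun q => a q * (l1 * q.1.1))
           (fun q => (-1) * (b q * (l2 * q.2.2))) (fun q => b q * (l2 * q.2.1))).
have Sa : Sm a := @Sm_aa R.
have Sb : Sm b := @Sm_bb R.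
split.
  apply: smooth_mk => n; (apply: Cn_mul; [by []|apply: Cn_mul; [exact: Cn_cst|]]);
  by [exact: Cn_pr11|exact: Cn_pr12|exact: Cn_pr21|exact: Cn_pr22].
split.
  apply: smooth_mk => n; try (apply: Cn_mul; first exact: Cn_cst);
  (apply: Cn_mul; [by []|apply: Cn_mul; [exact: Cn_cst|]]);
  by [exact: Cn_pr11|exact: Cn_pr12|exact: Cn_pr21|exact: Cn_pr22].
split.
  move=> p _ hx hy.
  have ab : a p + b p = 1 := aabb p.
  have l1n : l1 != 0 by rewrite gt_eqF.
  have l2n : l2 != 0 by rewrite gt_eqF.
  rewrite /dlogH /mk /=.
  rewrite (cdiv1 _ l1n hx) (cdiv1 _ l2n hy) (cdivI _ l1n hx) (cdivI _ l2n hy).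
  by rewrite !addpair ab addr0.
have a0 : forall p, 0 <= a p := @aa_ge0 R.
have b0 : forall p, 0 <= b p := @bb_ge0 R.
split.
  apply: flow_lemma => p _; rewrite /mk /=.
  - have := a0 p; set A := a p => A0.
    have -> : p.1.1 * - (A * (l1 * p.1.1)) + p.1.2 * - (A * (l1 * p.1.2)) =
      - ((A * l1) * (p.1.1 ^+ 2 + p.1.2 ^+ 2)) by ring.
    by rewrite oppr_le0 mulr_ge0 ?addr_ge0 ?sqr_ge0 // mulr_ge0 // ltW.
  - have := b0 p; set A := b p => A0.
    have -> : p.2.1 * - (A * (l2 * p.2.1)) + p.2.2 * - (A * (l2 * p.2.2)) =
      - ((A * l2) * (p.2.1 ^+ 2 + p.2.2 ^+ 2)) by ring.
    by rewrite oppr_le0 mulr_ge0 ?addr_ge0 ?sqr_ge0 // mulr_ge0 // ltW.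
split.
  apply: flow_lemma => p _; rewrite /mk /=.
  - by rewrite le_eqVlt; apply/orP; left; apply/eqP; ring.
  - by rewrite le_eqVlt; apply/orP; left; apply/eqP; ring.
have e0 : (0 : R) < 4%:R^-1 by rewrite invr_gt0 ltr0n.
split.
  exists (4%:R^-1); split => // p _ hb; rewrite /mk /=.
  by rewrite /b (near01 hb) !mul0r.
split.
  exists (4%:R^-1); split => // p _ hb; rewrite /mk /=.
  by rewrite /b (near01 hb) !mul0r mulr0.
split.
  exists (4%:R^-1); split => // p _ hb; rewrite /mk /=.
  by rewrite /a (near10 hb) !mul0r.
exists (4%:R^-1); split => // p _ hb; rewrite /mk /=.
by rewrite /a (near10 hb) !mul0r mulr0.
Qed.
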